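(* Let $\gamma>0$. There exists a sequence of positive numbers $(\beta_n)_{n\ge1}$ such that, with the convention $\beta_0=0$, $$\sup_{n\ge1}\Big\{(1-\nu_n)\Big(p_n+\frac{|q_n|}{\beta_n}+|q_{n-1}|\,\beta_{n-1}\Big)\Big\}<1 .$$
   Context: For $\gamma>0$ and integers $n\ge1$ define $\nu_n=\nu_n(\gamma)=(-1)^n\frac{\Gamma(2\gamma)\Gamma(n+\gamma)}{\Gamma(\gamma)\Gamma(n+2\gamma)}$, $p_n=p_n(\gamma)=\frac{2n(n-1)+(6n-4)\gamma+6\gamma^2}{(2n+3\gamma)(2n+3\gamma-2)}=\frac12+\frac{-\gamma+\frac32\gamma^2}{(2n+3\gamma)(2n+3\gamma-2)}$, $q_n=q_n(\gamma)=-\frac{1}{2n+3\gamma}\sqrt{\frac{(n+3\gamma-1)(n+1)(n+\gamma)}{(2n+3\gamma+1)(2n+3\gamma-1)}}$ (for $n\ge1$; the term with $q_0$ is multiplied by $\beta_0=0$ and hence absent). *)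

(* Defs.v *)
From Stdlib Require Import Reals.
Open Scope R_scope.

(* Gamma(2g) Gamma(n+g) / (Gamma(g) Gamma(n+2g)) written out via the
   functional equation Gamma(x+1) = x Gamma(x):
   = prod_{k=0}^{n-1} (g+k)/(2g+k).  (Stdlib has no Gamma function.) *)
Fixpoint gamma_ratio (g : R) (n : nat) : R :=
  match n with
  | O => 1
  | S m => gamma_ratio g m * ((g + INR m) / (2 * g + INR m))
  end.

Definition nu (g : R) (n : nat) : R := (-1) ^ n * gamma_ratio g n.

Definition p (g : R) (n : nat) : R :=
  let N := INR n in
  (2 * N * (N - 1) + (6 * N - 4) * g + 6 * g ^ 2)
  / ((2 * N + 3 * g) * (2 * N + 3 * g - 2)).

Definition q (g : R) (n : nat) : R :=
  let N := INR n in
  - (1 / (2 * N + 3 * g)) *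
  sqrt ((N + 3 * g - 1) * (N + 1) * (N + g)
        / ((2 * N + 3 * g + 1) * (2 * N + 3 * g - 1))).

(* Main.v *)
Require Import Defs.
From Stdlib Require Import Reals Lra Lia Psatz.
Open Scope R_scope.

Section S.
Variable g : R.
Hypothesis hg : 0 < g.

Lemma gr_S m : gamma_ratio g (S m) = gamma_ratio g m * ((g + INR m) / (2 * g + INR m)).
Proof. reflexivity. Qed.

Lemma fac_bounds m : 0 < (g + INR m) / (2 * g + INR m) <= 1.
Proof.
  pose proof (pos_INR m).
  split.
  - apply Rdiv_lt_0_compat; lra.
  - apply Rmult_le_reg_r with (2*g + INR m); [lra|].
    unfold Rdiv; rewrite Rmult_assoc, Rinv_l; lra.
Qed.

Lemma gr_pos m : 0 < gamma_ratio g m.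
Proof.
  induction m; simpl; [lra|].
  pose proof (fac_bounds m). apply Rmult_lt_0_compat; lra.
Qed.

Lemma gr_dec m : gamma_ratio g (S m) <= gamma_ratio g m.
Proof.
  rewrite gr_S. pose proof (fac_bounds m). pose proof (gr_pos m).
  nra.
Qed.

Lemma gr_mono m k : (m <= k)%nat -> gamma_ratio g k <= gamma_ratio g m.
Proof.
  induction 1; [lra|]. pose proof (gr_dec m0). lra.
Qed.

Lemma gr1 : gamma_ratio g 1 = 1/2.
Proof. simpl. field. lra. Qed.

Lemma gr2 : gamma_ratio g 2 = (g+1)/(2*(2*g+1)).
Proof. simpl. field. lra. Qed.

Lemma gr3 : gamma_ratio g 3 = (g+2)/(4*(2*g+1)).
Proof. simpl. field. lra. Qed.

Lemma gr_le_half m : (1 <= m)%nat -> gamma_ratio g m <= 1/2.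
Proof. intro H. rewrite <- gr1. apply gr_mono; auto. Qed.

Lemma sign_cases m : ((-1)^m = 1 /\ (-1)^(S m) = -1) \/ ((-1)^m = -1 /\ (-1)^(S m) = 1).
Proof.
  induction m; simpl; [left; split; lra|].
  destruct IHm as [[H1 H2]|[H1 H2]]; simpl in *; [right|left]; split; lra.
Qed.

End S.

Section S.
Variable g : R.
Hypothesis hg : 0 < g.

Definition uu (n : nat) := 2 * INR n + 3 * g.
Definition ee (n : nat) := 3/2 * g^2 / (uu n * (uu n - 2)).

Lemma INR_ge1 n : (1 <= n)%nat -> 1 <= INR n.
Proof. intro H. apply (le_INR 1) in H. simpl in H. lra. Qed.

Lemma uu_ge n : (1 <= n)%nat -> 2 + 3*g <= uu n.
Proof. intro H. pose proof (INR_ge1 n H). unfold uu. lra. Qed.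

Lemma D_pos n : (1 <= n)%nat -> 0 < uu n * (uu n - 2).
Proof. intro H. pose proof (uu_ge n H). apply Rmult_lt_0_compat; lra. Qed.

Lemma p_eq n : (1 <= n)%nat -> p g n = 1/2 + ee n - g / (uu n * (uu n - 2)).
Proof.
  intro H. pose proof (uu_ge n H).
  unfold p, ee, uu in *. field. split; lra.
Qed.

Lemma p_le n : (1 <= n)%nat -> p g n <= 1/2 + ee n.
Proof.
  intro H. rewrite p_eq by auto. pose proof (D_pos n H).
  assert (0 <= g / (uu n * (uu n - 2))) by (apply Rlt_le, Rdiv_lt_0_compat; lra).
  lra.
Qed.

Lemma ee_mono n m : (1 <= n)%nat -> (n <= m)%nat -> ee m <= ee n.
Proof.
  intros H1 H2. pose proof (D_pos n H1).
  assert (H3: uu n <= uu m).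
  { unfold uu. apply le_INR in H2. lra. }
  pose proof (uu_ge n H1).
  unfold ee. unfold Rdiv. apply Rmult_le_compat_l.
  - nra.
  - apply Rinv_le_contravar; [lra|]. nra.
Qed.

Lemma ee_lt n : (1 <= n)%nat -> ee n < 1/6.
Proof.
  intro H. pose proof (uu_ge n H). pose proof (D_pos n H).
  unfold ee. apply Rmult_lt_reg_r with (uu n * (uu n - 2)); [lra|].
  unfold Rdiv. rewrite Rmult_assoc, Rinv_l by lra.
  nra.
Qed.

Lemma ee_pos n : (1 <= n)%nat -> 0 <= ee n.
Proof.
  intro H. pose proof (D_pos n H). unfold ee.
  apply Rlt_le, Rdiv_lt_0_compat; nra.
Qed.

End S.

Section S.
Variable g : R.
Hypothesis hg : 0 < g.

Definition AA (n : nat) := let N := INR n in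
  (N + 3 * g - 1) * (N + 1) * (N + g) / ((2 * N + 3 * g + 1) * (2 * N + 3 * g - 1)).

Lemma AA_pos n : (1 <= n)%nat -> 0 < AA n.
Proof.
  intro H. pose proof (INR_ge1 n H). unfold AA.
  apply Rdiv_lt_0_compat; apply Rmult_lt_0_compat; try apply Rmult_lt_0_compat; lra.
Qed.

Lemma absq n : (1 <= n)%nat -> Rabs (q g n) = / (2 * INR n + 3 * g) * sqrt (AA n).
Proof.
  intro H. pose proof (INR_ge1 n H). pose proof (AA_pos n H).
  unfold q. fold (AA n).
  rewrite Rabs_left.
  - field. lra.
  - assert (0 < sqrt (AA n)) by (apply sqrt_lt_R0; auto).
    assert (0 < 1 / (2 * INR n + 3 * g)) by (apply Rdiv_lt_0_compat; lra).
    nra.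
Qed.

Lemma absq_pos n : (1 <= n)%nat -> 0 < Rabs (q g n).
Proof.
  intro H. pose proof (INR_ge1 n H). pose proof (AA_pos n H).
  rewrite absq by auto.
  apply Rmult_lt_0_compat; [apply Rinv_0_lt_compat; lra| apply sqrt_lt_R0; auto].
Qed.

Lemma absq2 n : (1 <= n)%nat -> Rabs (q g n) * Rabs (q g n) = AA n / (2 * INR n + 3 * g)^2.
Proof.
  intro H. pose proof (INR_ge1 n H). pose proof (AA_pos n H).
  rewrite absq by auto.
  transitivity (/ (2 * INR n + 3 * g) * / (2 * INR n + 3 * g) * (sqrt (AA n) * sqrt (AA n))); [ring|].
  rewrite sqrt_sqrt by lra. field. lra.
Qed.

End S.

Ltac mono_pos := repeat (apply Rplus_le_le_0_compat);
  (apply Rmult_le_pos; [lra | apply Rmult_le_pos; apply pow_le; lra]).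

Lemma poly_pos (g t : R) : 0 <= g -> 0 <= t -> 0 <= (145152/5) * (g^0 * t^0) + (1375488/5) * (g^0 * t^1) + (3208896/5) * (g^0 * t^2) + (3563904/5) * (g^0 * t^3) + (2247616/5) * (g^0 * t^4) + (852544/5) * (g^0 * t^5) + (193152/5) * (g^0 * t^6) + (24128/5) * (g^0 * t^7) + 256 * (g^0 * t^8) + 1762560 * (g^1 * t^0) + 6478272 * (g^1 * t^1) + (48948768/5) * (g^1 * t^2) + (40216512/5) * (g^1 * t^3) + (19774496/5) * (g^1 * t^4) + (5976224/5) * (g^1 * t^5) + (1084608/5) * (g^1 * t^6) + (107872/5) * (g^1 * t^7) + 896 * (g^1 * t^8) + (39661488/5) * (g^2 * t^0) + (119332224/5) * (g^2 * t^1) + 29562192 * (g^2 * t^2) + 19658928 * (g^2 * t^3) + (38048592/5) * (g^2 * t^4) + (8595456/5) * (g^2 * t^5) + 210240 * (g^2 * t^6) + 10752 * (g^2 * t^7) + (78895944/5) * (g^3 * t^0) + (197594208/5) * (g^3 * t^1) + (199467144/5) * (g^3 * t^2) + (104386488/5) * (g^3 * t^3) + 5994456 * (g^3 * t^4) + (4488816/5) * (g^3 * t^5) + 54912 * (g^3 * t^6) + 17618796 * (g^4 * t^0) + (180110088/5) * (g^4 * t^1) + (142977636/5) * (g^4 * t^2) + 11065932 * (g^4 * t^3) + (10472256/5) * (g^4 * t^4) + 155520 * (g^4 * t^5) + (59729238/5) * (g^5 * t^0) + (95852484/5) * (g^5 * t^1) + (56113722/5) * (g^5 * t^2) + (14260806/5)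 * (g^5 * t^3) + 266328 * (g^5 * t^4) + (24944274/5) * (g^6 * t^0) + (29412882/5) * (g^6 * t^1) + (11264184/5) * (g^6 * t^2) + 281232 * (g^6 * t^3) + (6196014/5) * (g^7 * t^0) + (4753566/5) * (g^7 * t^1) + 177876 * (g^7 * t^2) + 164754 * (g^8 * t^0) + 61236 * (g^8 * t^1) + 8748 * (g^9 * t^0).
Proof. intros Hg Ht. mono_pos. Qed.

Lemma keyN (g t : R) : 0 < g -> 0 <= t ->
  let N := t + 3 in let u := 2 * N + 3 * g in
  let E := 3/2 * g^2 / (u * (u - 2)) in
  21/20 * (4 * ((N + 3*g - 1) * (N + 1) * (N + g) / ((u + 1) * (u - 1)) / u^2))
  <= (1/2 - E) * (4 * (2*g+1) / (3 * (3*g+2)) - 1/2 - E).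
Proof.
  intros Hg Ht N u E.
  assert (Hu : 6 + 3*g <= u) by (unfold u, N; lra).
  apply Rminus_le. 
  assert (Hid : 21/20 * (4 * ((N + 3*g - 1) * (N + 1) * (N + g) / ((u + 1) * (u - 1)) / u^2))
  - (1/2 - E) * (4 * (2*g+1) / (3 * (3*g+2)) - 1/2 - E)
   = - ((145152/5) * (g^0 * t^0) + (1375488/5) * (g^0 * t^1) + (3208896/5) * (g^0 * t^2) + (3563904/5) * (g^0 * t^3) + (2247616/5) * (g^0 * t^4) + (852544/5) * (g^0 * t^5) + (193152/5) * (g^0 * t^6) + (24128/5) * (g^0 * t^7) + 256 * (g^0 * t^8) + 1762560 * (g^1 * t^0) + 6478272 * (g^1 * t^1) + (48948768/5) * (g^1 * t^2) + (40216512/5) * (g^1 * t^3) + (19774496/5) * (g^1 * t^4) + (5976224/5) * (g^1 * t^5) + (1084608/5) * (g^1 * t^6) + (107872/5) * (g^1 * t^7) + 896 * (g^1 * t^8) + (39661488/5) * (g^2 * t^0) + (119332224/5) * (g^2 * t^1) + 29562192 * (g^2 * t^2) + 19658928 * (g^2 * t^3) + (38048592/5) * (g^2 * t^4) + (8595456/5) * (g^2 * t^5) + 210240 * (g^2 * t^6) + 10752 * (g^2 * t^7) + (78895944/5) * (g^3 * t^0) + (197594208/5) * (g^3 * t^1) + (199467144/5) * (g^3 * t^2) + (104386488/5) * (g^3 * t^3) + 5994456 * (g^3 * t^4) + (4488816/5) * (g^3 * t^5) + 54912 * (g^3 * t^6) + 17618796 * (g^4 * t^0) + (180110088/5) * (g^4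 * t^1) + (142977636/5) * (g^4 * t^2) + 11065932 * (g^4 * t^3) + (10472256/5) * (g^4 * t^4) + 155520 * (g^4 * t^5) + (59729238/5) * (g^5 * t^0) + (95852484/5) * (g^5 * t^1) + (56113722/5) * (g^5 * t^2) + (14260806/5) * (g^5 * t^3) + 266328 * (g^5 * t^4) + (24944274/5) * (g^6 * t^0) + (29412882/5) * (g^6 * t^1) + (11264184/5) * (g^6 * t^2) + 281232 * (g^6 * t^3) + (6196014/5) * (g^7 * t^0) + (4753566/5) * (g^7 * t^1) + 177876 * (g^7 * t^2) + 164754 * (g^8 * t^0) + 61236 * (g^8 * t^1) + 8748 * (g^9 * t^0)) / ((u*(u-2))^2 * (6*(3*g+2)) * ((u+1)*(u-1)*u*u))).
  { unfold E, u, N. field. repeat split; lra. }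
  rewrite Hid. 
  assert (0 < (u*(u-2))^2 * (6*(3*g+2)) * ((u+1)*(u-1)*u*u)).
  { repeat apply Rmult_lt_0_compat; try apply pow_lt; try apply Rmult_lt_0_compat; lra. }
  pose proof (poly_pos g t (Rlt_le _ _ Hg) Ht).
  unfold Rdiv. rewrite Ropp_mult_distr_l_reverse.
  apply Ropp_le_cancel. rewrite Ropp_involutive, Ropp_0.
  apply Rmult_le_pos; [lra|]. apply Rlt_le, Rinv_0_lt_compat; lra.
Qed.

Section S.
Variable g : R.
Hypothesis hg : 0 < g.

Definition ss (n : nat) := 1 / (1 - nu g n) - p g n.
Definition c3 := 4 * (2*g+1) / (3 * (3*g+2)).

Lemma nu_range n : (1 <= n)%nat -> 1/2 <= 1 - nu g n <= 3/2.
Proof.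
  intro H. pose proof (gr_pos g hg n). pose proof (gr_le_half g hg n H).
  unfold nu. destruct (sign_cases n) as [[Hs _]|[Hs _]]; rewrite Hs; lra.
Qed.

Lemma ss_even n : (1 <= n)%nat -> (-1)^n = 1 -> 1 - p g n <= ss n.
Proof.
  intros H H1. pose proof (gr_pos g hg n). pose proof (gr_le_half g hg n H).
  unfold ss, nu. rewrite H1, Rmult_1_l.
  assert (1 <= 1 / (1 - gamma_ratio g n)).
  { apply Rmult_le_reg_r with (1 - gamma_ratio g n); [lra|].
    unfold Rdiv. rewrite Rmult_assoc, Rinv_l by lra. lra. }
  lra.
Qed.

Lemma ss_odd n : (3 <= n)%nat -> (-1)^n = -1 -> c3 - p g n <= ss n.
Proof.
  intros H H1. pose proof (gr_pos g hg n). pose proof (gr_mono g hg 3 n H).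
  rewrite gr3 in H2 by auto.
  unfold ss, nu. rewrite H1.
  assert (c3 <= 1 / (1 - -1 * gamma_ratio g n)).
  { replace c3 with (1 / (1 + (g+2)/(4*(2*g+1)))) by (unfold c3; field; lra).
    replace (1 - -1 * gamma_ratio g n) with (1 + gamma_ratio g n) by ring.
    unfold Rdiv. rewrite !Rmult_1_l. apply Rinv_le_contravar; [lra|].
    unfold Rdiv in H2. lra. }
  lra.
Qed.

Lemma ss1 : ss 1 = 2 / (3 * (2 + 3*g)).
Proof.
  unfold ss, nu. rewrite gr1 by auto. unfold p. simpl. field. lra.
Qed.

Lemma ss2 : ss 2 = 2*(2*g+1)/(3*g+1) - (4+8*g+6*g^2)/((4+3*g)*(2+3*g)).
Proof.
  unfold ss, nu. rewrite gr2 by auto. unfold p. simpl. field. lra.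
Qed.

Lemma ss3 : ss 3 = c3 - (12+14*g+6*g^2)/((6+3*g)*(4+3*g)).
Proof.
  unfold ss, nu, c3. rewrite gr3 by auto. unfold p. simpl. field. lra.
Qed.

End S.

Section S.
Variable g : R.
Hypothesis hg : 0 < g.

Lemma prod1 : 21/20 * (4 * (Rabs (q g 1) * Rabs (q g 1))) <= ss g 1 * ss g 2.
Proof.
  rewrite absq2 by (auto; lia). rewrite ss1, ss2 by auto. unfold AA. simpl.
  apply Rminus_le.
  match goal with |- ?a - ?b <= 0 =>
  replace (a - b) with (- (24 * g^0 + (-24/5) * g^1 + (222/5) * g^2 + 36 * g^3) / (3 * (2+3*g)^2 * (3*g+1) * (4+3*g))) by (field; lra) end.
  assert (0 < 3 * (2+3*g)^2 * (3*g+1) * (4+3*g)).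
  { repeat apply Rmult_lt_0_compat; try apply pow_lt; lra. }
  assert (0 <= 24 * g^0 + (-24/5) * g^1 + (222/5) * g^2 + 36 * g^3) by nra.
  unfold Rdiv. rewrite Ropp_mult_distr_l_reverse.
  apply Ropp_le_cancel. rewrite Ropp_involutive, Ropp_0.
  apply Rmult_le_pos; [lra|]. apply Rlt_le, Rinv_0_lt_compat; lra.
Qed.

Lemma prod2 : 21/20 * (4 * (Rabs (q g 2) * Rabs (q g 2))) <= ss g 2 * ss g 3.
Proof.
  rewrite absq2 by (auto; lia). rewrite ss2, ss3 by auto. unfold AA, c3. simpl.
  apply Rminus_le.
  match goal with |- ?a - ?b <= 0 =>
  replace (a - b)
  with (- ((4176/5) * g^0 + 9216 * g^1 + (205776/5) * g^2 + (496872/5) * g^3 + (702099/5) * g^4 + (580806/5) * g^5 + (266031/5) * g^6 + 11988 * g^7 + 972 * g^8) / ((3*g+1)*(4+3*g)*(2+3*g)*(3*(3*g+2))*(6+3*g)*(4+3*g)*(5+3*g)*(1+g))) by (field; lra) end.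
  assert (0 < (3*g+1)*(4+3*g)*(2+3*g)*(3*(3*g+2))*(6+3*g)*(4+3*g)*(5+3*g)*(1+g)).
  { repeat apply Rmult_lt_0_compat; lra. }
  assert (0 <= (4176/5) * g^0 + 9216 * g^1 + (205776/5) * g^2 + (496872/5) * g^3 + (702099/5) * g^4 + (580806/5) * g^5 + (266031/5) * g^6 + 11988 * g^7 + 972 * g^8).
  { repeat (apply Rplus_le_le_0_compat); (apply Rmult_le_pos; [lra | apply pow_le; lra]). }
  unfold Rdiv. rewrite Ropp_mult_distr_l_reverse.
  apply Ropp_le_cancel. rewrite Ropp_involutive, Ropp_0.
  apply Rmult_le_pos; [lra|]. apply Rlt_le, Rinv_0_lt_compat; lra.
Qed.

End S.

Section S.
Variable g : R.
Hypothesis hg : 0 < g.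

Lemma sig3_pos : 0 < c3 g - 1/2 - ee g 3.
Proof.
  unfold c3, ee, uu. simpl.
  apply Rminus_gt_0_lt. 
  match goal with |- 0 < ?a => replace a with ((36*g^3+210*g^2+228*g+48)/(6*(3*g+2)*(6+3*g)*(4+3*g))) by (field; lra) end.
  apply Rdiv_lt_0_compat; [nra|]. repeat apply Rmult_lt_0_compat; lra.
Qed.

Lemma LB2_pos n : (3 <= n)%nat -> 0 < c3 g - 1/2 - ee g n.
Proof. intro H. pose proof sig3_pos. pose proof (ee_mono g hg 3 n ltac:(lia) H). lra. Qed.

Lemma prodN n : (3 <= n)%nat ->
  21/20 * (4 * (Rabs (q g n) * Rabs (q g n))) <= ss g n * ss g (S n).
Proof.
  intro H.
  assert (HLB : (1/2 - ee g n) * (c3 g - 1/2 - ee g n) <= ss g n * ss g (S n)).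
  { pose proof (LB2_pos n H). pose proof (ee_lt g hg n ltac:(lia)).
    pose proof (ee_mono g hg n (S n) ltac:(lia) ltac:(lia)).
    pose proof (p_le g hg n ltac:(lia)). pose proof (p_le g hg (S n) ltac:(lia)).
    destruct (sign_cases n) as [[Hs1 Hs2]|[Hs1 Hs2]].
    - pose proof (ss_even g hg n ltac:(lia) Hs1). pose proof (ss_odd g hg (S n) ltac:(lia) Hs2).
      apply Rmult_le_compat; lra.
    - pose proof (ss_odd g hg n ltac:(lia) Hs1). pose proof (ss_even g hg (S n) ltac:(lia) Hs2).
      rewrite (Rmult_comm (1/2 - ee g n)). apply Rmult_le_compat; lra. }
  eapply Rle_trans; [|exact HLB].
  rewrite (absq2 g hg) by lia. unfold AA, ee, uu, c3.
  assert (Ht : 0 <= INR n - 3).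
  { apply le_INR in H. simpl in H. lra. }
  pose proof (keyN g (INR n - 3) hg Ht) as K. simpl in K.
  replace (INR n - 3 + 3) with (INR n) in K by ring.
  exact K.
Qed.

End S.

Section S.
Variable g : R.
Hypothesis hg : 0 < g.

Definition sig := Rmin (2 / (3 * (2 + 3*g))) (Rmin (1/3) (c3 g - 1/2 - ee g 3)).

Lemma sig_pos : 0 < sig.
Proof.
  unfold sig. pose proof (sig3_pos g hg).
  assert (0 < 2 / (3 * (2 + 3*g))) by (apply Rdiv_lt_0_compat; lra).
  repeat apply Rmin_pos; lra.
Qed.

Lemma ss_ge n : (1 <= n)%nat -> sig <= ss g n.
Proof.
  intro H. unfold sig.
  destruct (Nat.eq_dec n 1) as [->|Hn1].
  { rewrite ss1 by auto. apply Rmin_l. }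
  pose proof (ee_lt g hg n H). pose proof (p_le g hg n H).
  destruct (sign_cases n) as [[Hs _]|[Hs _]].
  - pose proof (ss_even g hg n H Hs).
    eapply Rle_trans; [apply Rmin_r|]. eapply Rle_trans; [apply Rmin_l|]. lra.
  - assert (n <> 2%nat) by (intro; subst; simpl in Hs; lra).
    pose proof (ss_odd g hg n ltac:(lia) Hs).
    pose proof (ee_mono g hg 3 n ltac:(lia) ltac:(lia)).
    eapply Rle_trans; [apply Rmin_r|]. eapply Rle_trans; [apply Rmin_r|]. lra.
Qed.

Lemma prod_all m : (1 <= m)%nat ->
  21/20 * (4 * (Rabs (q g m) * Rabs (q g m))) <= ss g m * ss g (S m).
Proof.
  intro H. destruct (Nat.eq_dec m 1) as [->|H1]; [apply prod1; auto|].
  destruct (Nat.eq_dec m 2) as [->|H2]; [apply prod2; auto|].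
  apply prodN; auto; lia.
Qed.

End S.

Theorem propositionA2 (g : R) (hg : 0 < g) :
  exists beta : nat -> R,
    beta 0%nat = 0 /\
    (forall n : nat, (1 <= n)%nat -> 0 < beta n) /\
    exists c : R, c < 1 /\
      forall n : nat, (1 <= n)%nat ->
        (1 - nu g n) *
          (p g n + Rabs (q g n) / beta n + Rabs (q g (n - 1)) * beta (n - 1)%nat)
        <= c.
Proof.
  pose (beta := fun n : nat => match n with O => 0 | _ => 2 * Rabs (q g n) / ss g n end).
  assert (Hss : forall n, (1 <= n)%nat -> 0 < ss g n).
  { intros n Hn. pose proof (ss_ge g hg n Hn). pose proof (sig_pos g hg). lra. }
  assert (Hb : forall n, (1 <= n)%nat -> beta n = 2 * Rabs (q g n) / ss g n).
  { intros [|n] Hn; [lia|reflexivity]. }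
  exists beta. split; [reflexivity|]. split.
  { intros n Hn. rewrite Hb by auto. pose proof (absq_pos g hg n Hn). pose proof (Hss n Hn).
    apply Rdiv_lt_0_compat; lra. }
  exists (1 - sig g / 84). pose proof (sig_pos g hg). split; [lra|].
  intros n Hn.
  pose proof (Hss n Hn) as Hsn. pose proof (ss_ge g hg n Hn) as Hsig.
  pose proof (nu_range g hg n Hn) as [Ha1 Ha2].
  pose proof (absq_pos g hg n Hn) as Hq.
  assert (HX : Rabs (q g n) / beta n = ss g n / 2).
  { rewrite Hb by auto. field. lra. }
  assert (Hid : (1 - nu g n) * (p g n + ss g n) = 1).
  { unfold ss. field. lra. }
  assert (HY : 0 <= Rabs (q g (n - 1)) * beta (n - 1)%nat <= 10/21 * ss g n).
  { destruct n as [|m]; [lia|]. replace (S m - 1)%nat with m by lia.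
    destruct m as [|m'].
    - simpl beta. rewrite Rmult_0_r. split; [lra|]. nra.
    - set (m := S m') in *.
      assert (Hm : (1 <= m)%nat) by (unfold m; lia).
      rewrite Hb by auto.
      pose proof (prod_all g hg m Hm) as Hp.
      pose proof (Hss m Hm). pose proof (absq_pos g hg m Hm).
      assert (E : Rabs (q g m) * (2 * Rabs (q g m) / ss g m) = 2 * (Rabs (q g m) * Rabs (q g m)) / ss g m)
        by (field; lra).
      rewrite E. split.
      + apply Rmult_le_pos; [nra|]. apply Rlt_le, Rinv_0_lt_compat; lra.
      + apply Rmult_le_reg_r with (ss g m); [lra|].
        unfold Rdiv. rewrite Rmult_assoc, Rinv_l by lra. nra. }
  rewrite HX.
  set (a := 1 - nu g n) in *. set (Y := Rabs (q g (n - 1)) * beta (n - 1)%nat) in *.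
  set (s := ss g n) in *.
  assert (a * Y <= a * (10/21 * s)) by (apply Rmult_le_compat_l; lra).
  assert (sig g / 2 <= a * s) by nra.
  nra.
Qed.
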